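(* Let $(S_j)_{j\ge1}$ be a $\boldsymbol\mu$-geometrically Cauchy sequence in $\mathbb T$. Then there is $S\in\mathbb T$ such that $S_j$ converges $\boldsymbol\mu$-geometrically to $S$.
   Context: $\mathbb T$ is the field of real grid-based transseries over the ordered group $\mathfrak G$ of transmonomials; $\operatorname{mag}T$ is the dominant monomial of $T\ne0$. A ratio set is a finite $\boldsymbol\mu\subset\{\mathfrak g\prec1\}$; $\boldsymbol\mu^*$ (resp. $\boldsymbol\mu^+$) is the set of products of zero or more (resp. one or more) elements of $\boldsymbol\mu$. Monomials: $\mathfrak m\prec^{\boldsymbol\mu}\mathfrak n$ iff $\mathfrak m/\mathfrak n\in\boldsymbol\mu^+$; transseries: $A\prec^{\boldsymbol\mu}B$ (written also $B\succ^{\boldsymbol\mu}A$) iff each $\mathfrak a\in\operatorname{supp}A$ is $\prec^{\boldsymbol\mu}$ some $\mathfrak b\in\operatorname{supp}B$. $\boldsymbol\mu$ witnesses nonzero $T$ iff $\operatorname{supp}T\subseteq(\operatorname{mag}T)\boldsymbol\mu^*$. A sequence $(S_j)$ is $\boldsymbol\mu$-geometrically Cauchy if for all $j$, $\boldsymbol\mu$ witnesses $S_{j+1}-S_j$ and (for $j\ge2$) $S_j-S_{j-1}\succ^{\boldsymbol\mu}S_{j+1}-S_j$; equivalently the series $\sum_{j\ge1}(S_{j+1}-S_j)$ is $\boldsymbol\mu$-geometrically convergent, where $\sum A_j$ is $\boldsymbol\mu$-geometrically convergent if $\boldsymbol\mu$ witnesses each $A_j$ and $A_j\succ^{\boldsymbol\mu}A_{j+1}$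 for all $j$. $S_j$ converges $\boldsymbol\mu$-geometrically to $S$ if for all $j$, $\boldsymbol\mu$ witnesses $S-S_j$ and $S-S_j\succ^{\boldsymbol\mu}S-S_{j+1}$. *)

(* Defs.v *)
From HB Require Import structures.
From mathcomp Require Import all_boot all_order all_algebra.
From mathcomp Require Import all_classical all_reals.
Set Implicit Arguments. Unset Strict Implicit. Unset Printing Implicit Defensive.
Import Order.TTheory GRing.Theory Num.Theory.
Local Open Scope ring_scope.

(* The monomial group 𝔊 is written ADDITIVELY: G : porderZmodType, where
   the order "<" on G is the asymptotic dominance order "≺" on monomials,
   the group operation "+" is the monomial product, and 0 is the monomial 1.
   We require the order to be total and translation invariant, i.e. G is an
   ordered abelian group (as the group of transmonomials is). *)
Definition ordered_abelian_group (G : porderZmodType) : Prop :=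
  (forall x y : G, (x <= y) || (y <= x)) /\
  (forall x y z : G, x <= y -> x + z <= y + z).

Definition series (G : porderZmodType) (R : realType) := G -> R.

Definition sub_series G R (A B : series G R) : series G R := fun g => A g - B g.

Definition mstar (G : porderZmodType) (mu : seq G) (g : G) : Prop :=
  exists c : 'I_(size mu) -> nat,
    g = \sum_(i < size mu) (nth 0 mu i) *+ c i.

Definition mplus (G : porderZmodType) (mu : seq G) (g : G) : Prop :=
  exists c : 'I_(size mu) -> nat,
    (0 < \sum_(i < size mu) c i)%N /\
    g = \sum_(i < size mu) (nth 0 mu i) *+ c i.

Definition ratio_set (G : porderZmodType) (mu : seq G) : Prop :=
  forall g, g \in mu -> g < 0.

Definition grid_based (G : porderZmodType) (R : realType) (A : series G R) : Prop :=
  exists (m : G) (mu : seq G), ratio_set mu /\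
    forall g, A g != 0 -> exists h, mstar mu h /\ g = m + h.

Definition is_mag (G : porderZmodType) (R : realType) (A : series G R) (m : G) : Prop :=
  A m != 0 /\ forall g, A g != 0 -> g <= m.

Definition witnesses (G : porderZmodType) (R : realType) (mu : seq G) (A : series G R) : Prop :=
  (exists g, A g != 0) /\
  exists m, is_mag A m /\ forall g, A g != 0 -> exists h, mstar mu h /\ g = m + h.

Definition mprec (G : porderZmodType) (mu : seq G) (m n : G) : Prop :=
  exists h, mplus mu h /\ m = n + h.

Definition sprec (G : porderZmodType) (R : realType) (mu : seq G) (A B : series G R) : Prop :=
  forall a, A a != 0 -> exists b, B b != 0 /\ mprec mu a b.

Definition geom_cauchy (G : porderZmodType) (R : realType) (mu : seq G)
  (S : nat -> series G R) : Prop :=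
  forall j, (1 <= j)%N ->
    witnesses mu (sub_series (S j.+1) (S j)) /\
    ((2 <= j)%N -> sprec mu (sub_series (S j.+1) (S j)) (sub_series (S j) (S j.-1))).

Definition geom_converges (G : porderZmodType) (R : realType) (mu : seq G)
  (S : nat -> series G R) (L : series G R) : Prop :=
  forall j, (1 <= j)%N ->
    witnesses mu (sub_series L (S j)) /\
    sprec mu (sub_series L (S j.+1)) (sub_series L (S j)).

(* Main.v *)
Require Import Defs.
From mathcomp Require Import all_boot all_order all_algebra.
From mathcomp Require Import all_classical all_reals.
Import Order.TTheory GRing.Theory Num.Theory.
Set Implicit Arguments. Unset Strict Implicit.
Local Open Scope ring_scope.

Lemma oag_leD (G : porderZmodType) (HG : ordered_abelian_group G) (x y z : G) :
  x <= y -> x + z <= y + z.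
Proof. by case: HG => _; apply. Qed.

Lemma oag_ltDl (G : porderZmodType) (HG : ordered_abelian_group G) (x y : G) :
  x < 0 -> x + y < y.
Proof.
move=> hx; rewrite lt_neqAle; apply/andP; split.
  apply/eqP => h; have h0 : x = 0 by apply: (@addIr _ y); rewrite add0r.
  by move: hx; rewrite h0 ltxx.
by have := oag_leD HG y (ltW hx); rewrite add0r.
Qed.

Lemma oag_leDl (G : porderZmodType) (HG : ordered_abelian_group G) (x y : G) :
  x <= 0 -> x + y <= y.
Proof. by move=> hx; have := oag_leD HG y hx; rewrite add0r. Qed.

Lemma oag_le0D (G : porderZmodType) (HG : ordered_abelian_group G) (x y : G) :
  x <= 0 -> y <= 0 -> x + y <= 0.
Proof. by move=> hx hy; exact: le_trans (oag_leDl HG y hx) hy. Qed.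

Lemma oag_lt0D (G : porderZmodType) (HG : ordered_abelian_group G) (x y : G) :
  x < 0 -> y <= 0 -> x + y < 0.
Proof. by move=> hx hy; exact: lt_le_trans (oag_ltDl HG y hx) hy. Qed.

Lemma sum_split (G : porderZmodType) (mu : seq G) (c1 c2 : 'I_(size mu) -> nat) :
  \sum_(i < size mu) nth 0 mu i *+ (c1 i + c2 i)%N =
  \sum_(i < size mu) nth 0 mu i *+ c1 i + \sum_(i < size mu) nth 0 mu i *+ c2 i.
Proof. by rewrite -big_split /=; apply: eq_bigr => i _; rewrite mulrnDr. Qed.

Lemma mstar_add (G : porderZmodType) (mu : seq G) x y :
  mstar mu x -> mstar mu y -> mstar mu (x + y).
Proof.
move=> [c1 ->] [c2 ->]; exists (fun i => c1 i + c2 i)%N; by rewrite sum_split.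
Qed.

Lemma mplus_mstar (G : porderZmodType) (mu : seq G) x : mplus mu x -> mstar mu x.
Proof. by move=> [c [_ ->]]; exists c. Qed.

Lemma mstar_mplus_add (G : porderZmodType) (mu : seq G) x y :
  mstar mu x -> mplus mu y -> mplus mu (x + y).
Proof.
move=> [c1 ->] [c2 [hc ->]]; exists (fun i => c1 i + c2 i)%N; split; last by rewrite sum_split.
rewrite big_split /=; exact: leq_trans hc (leq_addl _ _).
Qed.

Lemma mstar0 (G : porderZmodType) (mu : seq G) : mstar mu 0.
Proof. by exists (fun _ => 0%N); rewrite big1 // => i _; rewrite mulr0n. Qed.

Lemma mulrn_le0 (G : porderZmodType) (HG : ordered_abelian_group G) (x : G) n :
  x <= 0 -> x *+ n <= 0.
Proof. move=> hx; elim: n => [|n IH]; first by rewrite mulr0n. by rewrite mulrS oag_le0D. Qed.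

Lemma mstar_le0 (G : porderZmodType) (HG : ordered_abelian_group G) (mu : seq G)
  (Hmu : ratio_set mu) x : mstar mu x -> x <= 0.
Proof.
move=> [c ->]; apply: (big_ind (fun x : G => x <= 0)) => //.
  by move=> a b; apply: oag_le0D.
by move=> i _; apply: mulrn_le0 => //; apply: ltW; apply: Hmu; apply: mem_nth.
Qed.

Lemma mplus_lt0 (G : porderZmodType) (HG : ordered_abelian_group G) (mu : seq G)
  (Hmu : ratio_set mu) x : mplus mu x -> x < 0.
Proof.
move=> [c [hc ->]].
have [i0 hi0] : exists i, (0 < c i)%N.
  apply: contrapT => hn; move: hc; rewrite big1 // => i _.
  by apply/eqP; rewrite -leqn0 leqNgt; apply/negP => h; apply: hn; exists i.
have hmu : nth 0 mu i0 < 0 by apply: Hmu; apply: mem_nth.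
rewrite (bigD1 i0) //=; apply: oag_lt0D => //.
  by rewrite -(prednK hi0) mulrS; apply: oag_lt0D => //; apply: mulrn_le0 => //; apply: ltW.
apply: (big_ind (fun x : G => x <= 0)) => //.
  by move=> a b; apply: oag_le0D.
by move=> i _; apply: mulrn_le0 => //; apply: ltW; apply: Hmu; apply: mem_nth.
Qed.

Lemma mstar_mem (G : porderZmodType) (l : seq G) x : x \in l -> mstar l x.
Proof.
move=> hx; have hi : (index x l < size l)%N by rewrite index_mem.
pose i0 := Ordinal hi.
exists (fun i => nat_of_bool (i == i0)).
rewrite (bigD1 i0) //= eqxx mulr1n big1 ?addr0 ?nth_index //.
by move=> i /negbTE ->; rewrite mulr0n.
Qed.

Lemma mstar_subset (G : porderZmodType) (l l' : seq G) x :
  {subset l <= l'} -> mstar l x -> mstar l' x.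
Proof.
move=> hs [c ->]; apply: (big_ind (mstar l')).
- exact: mstar0.
- by move=> a b; apply: mstar_add.
move=> i _; elim: (c i) => [|n IH]; first by rewrite mulr0n; apply: mstar0.
by rewrite mulrS; apply: mstar_add => //; apply: mstar_mem; apply: hs; apply: mem_nth.
Qed.

Lemma grid_union_le (G : porderZmodType) (HG : ordered_abelian_group G) (R : realType)
  (A : series G R) (a b : G) (nu mu : seq G) :
  ratio_set nu -> ratio_set mu -> a <= b ->
  (forall g, A g != 0 -> (exists h, mstar nu h /\ g = a + h) \/ (exists h, mstar mu h /\ g = b + h)) ->
  grid_based A.
Proof.
move=> hnu hmu hab hA.
pose d := a - b.
pose l := [seq x <- d :: nu ++ mu | x < 0].
exists b, l; split; first by move=> g; rewrite mem_filter => /andP[].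
have hnul : {subset nu <= l} by move=> x hx; rewrite mem_filter hnu //= inE mem_cat hx !orbT.
have hmul : {subset mu <= l} by move=> x hx; rewrite mem_filter hmu //= inE mem_cat hx !orbT.
have hd : mstar l d.
  have : d <= 0 by have := oag_leD HG (- b) hab; rewrite subrr.
  rewrite le_eqVlt => /orP[/eqP -> | hd]; first exact: mstar0.
  by apply: mstar_mem; rewrite mem_filter hd /= inE eqxx.
move=> g /hA [[h [hh ->]] | [h [hh ->]]].
  exists (d + h); split; first by apply: mstar_add => //; apply: (mstar_subset hnul).
  by rewrite /d addrA addrCA subrr addr0.
by exists h; split => //; apply: (mstar_subset hmul).
Qed.

Lemma grid_union (G : porderZmodType) (HG : ordered_abelian_group G) (R : realType)
  (A : series G R) (a b : G) (nu mu : seq G) :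
  ratio_set nu -> ratio_set mu ->
  (forall g, A g != 0 -> (exists h, mstar nu h /\ g = a + h) \/ (exists h, mstar mu h /\ g = b + h)) ->
  grid_based A.
Proof.
move=> hnu hmu hA; case/orP: (HG.1 a b) => hab.
  exact: (grid_union_le HG hnu hmu hab).
apply: (grid_union_le HG hmu hnu hab) => g /hA [] h; [right|left]; exact: h.
Qed.

Lemma keyK (G : porderZmodType) (R : realType) (mu : seq G) (S : nat -> series G R)
  (Hc : geom_cauchy mu S) j m : (1 <= j)%N ->
  (forall g, sub_series (S j.+1) (S j) g != 0 -> exists h, mstar mu h /\ g = m + h) ->
  forall k, (j < k)%N -> forall a, sub_series (S k.+1) (S k) a != 0 -> mprec mu a m.
Proof.
move=> hj hw; elim=> [//|k IH] hjk a ha.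
have h2 : (2 <= k.+1)%N by apply: leq_ltn_trans hj hjk.
have [b [hb [h [hh ->]]]] := (Hc k.+1 (ltnW h2)).2 h2 a ha.
move: hjk; rewrite ltnS leq_eqVlt => /orP[/eqP ejk | ltjk].
  subst k; have [h' [hh' ->]] := hw b hb.
  by exists (h' + h); split; [apply: mstar_mplus_add | rewrite addrA].
have [h' [hh' ->]] := IH ltjk b hb.
by exists (h' + h); split; [apply: mstar_mplus_add => //; apply: mplus_mstar | rewrite addrA].
Qed.

Lemma stableS (G : porderZmodType) (R : realType) (S : nat -> series G R) g N :
  (forall k, (N <= k)%N -> sub_series (S k.+1) (S k) g = 0) ->
  forall k, (N <= k)%N -> S k g = S N g.
Proof.
move=> hN; elim=> [|k IH] hk; first by move: hk; rewrite leqn0 => /eqP ->.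
move: hk; rewrite leq_eqVlt => /orP[/eqP -> //| hk].
have := hN k hk; rewrite /sub_series => /eqP; rewrite subr_eq0 => /eqP ->.
exact: IH.
Qed.
Unset Implicit Arguments.

Theorem proposition3p19 (G : porderZmodType) (R : realType)
  (HG : ordered_abelian_group G)
  (mu : seq G) (Hmu : ratio_set mu)
  (S : nat -> series G R)
  (HS : forall j, (1 <= j)%N -> grid_based (S j))
  (Hc : geom_cauchy mu S) :
  exists L : series G R, grid_based L /\ geom_converges mu S L.
Proof.
pose good g N := forall k, (N <= k)%N -> sub_series (S k.+1) (S k) g = 0.
pose L : series G R := fun g => match pselect (exists N, good g N) with
  | left H => S (proj1_sig (cid H)) g | right _ => 0 end.
have Lgood g j : good g j -> L g = S j g.
  move=> hj; rewrite /L; case: pselect => [H|H]; last by exfalso; apply: H; exists j.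
  case: cid => N0 hN0 /=; move: hN0 hj; rewrite /good => hN0 hj.
  have e1 := stableS hN0 (leq_maxr j N0). have e2 := stableS hj (leq_maxl j N0). by rewrite -e1 e2.
have E g j : sub_series L (S j) g != 0 ->
    exists k, (j <= k)%N /\ sub_series (S k.+1) (S k) g != 0.
  move=> hg; apply: contrapT => hn; move: hg.
  rewrite /sub_series (Lgood g j) ?subrr ?eqxx // => k hk.
  apply/eqP; apply: negbNE; apply/negP => h; apply: hn; exists k; split => //.
have supp j m : (1 <= j)%N ->
    (forall g, sub_series (S j.+1) (S j) g != 0 -> exists h, mstar mu h /\ g = m + h) ->
    forall g, sub_series L (S j) g != 0 -> exists h, mstar mu h /\ g = m + h.
  move=> hj hw g /E [k [hk hD]].
  move: hk; rewrite leq_eqVlt => /orP[/eqP ejk | ltjk]; first by subst k; apply: hw.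
  have [h [hh ->]] := keyK Hc hj hw ltjk hD.
  by exists h; split => //; apply: mplus_mstar.
exists L; split.
  have [m [nu [hnu hsupp]]] := HS 1%N isT.
  have [[_ [m1 [_ hw1]]] _] := Hc 1%N isT.
  apply: (grid_union HG hnu Hmu (a:=m) (b:=m1)) => g hg.
  have [h0|h0] := eqVneq (S 1%N g) 0; last by left; apply: hsupp.
  right; apply: (supp 1%N m1 isT hw1); by rewrite /sub_series h0 subr0.
move=> j hj.
have [[_ [m [[hm hmag] hw]]] _] := Hc j hj.
have hmj : sub_series L (S j) m != 0.
  rewrite /sub_series (Lgood m j.+1) //.
  move=> k hk; apply/eqP; apply: negbNE; apply/negP => hD.
  have [h [hh he]] := keyK Hc hj hw hk hD.
  have := oag_ltDl HG m (mplus_lt0 HG Hmu hh).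
  by rewrite addrC -he ltxx.
split.
  split; first by exists m.
  exists m; split; last exact: (supp j m hj hw).
  split => // g /(supp j m hj hw) [h [hh ->]].
  rewrite addrC; exact: (oag_leDl HG m (mstar_le0 HG Hmu hh)).
move=> a /E [k [hk hD]].
exists m; split => //.
have hh := keyK Hc hj hw hk hD. exact: hh.
Qed.
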